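(* For any $s\ge1$, let $\hat{\mathbf{w}}_s$ be the solution of $\mathrm{DS}(\hat\gamma_s)$. Let $S_s\subseteq[d]$ satisfy $|S_s|=k$ and $|\hat w_{s,i}|\ge|\hat w_{s,j}|$ for every $i\in S_s$ and $j\in[d]\setminus S_s$. Let $\mathbf{w}_s=\mathbf{w}^\ast(S\cap S_s)$. Then $\|\mathbf{w}_s-\mathbf{w}^\ast\|_1\le\|\hat{\mathbf{w}}_s-\mathbf{w}^\ast\|_1$.
   Context: Setting. Integers $d,k$ with $3\le k\le d-3$, horizon $T$. At each round $t$ an instance $\mathbf{x}_t\in\mathbb{R}^d$ with $\|\mathbf{x}_t\|_\infty\le1$ arrives, of which the learner observes at most $k$ coordinates; $y_t=\langle\mathbf{w}^\ast,\mathbf{x}_t\rangle+\eta_t$ with $\eta_t$ independent $\mathcal{N}(0,\sigma^2)$ and $\|\mathbf{w}^\ast\|_1\le1$, and $\|\mathbf{w}^\ast\|_0\le k$. $S=\mathrm{Supp}(\mathbf{w}^\ast)$. $\mathbf{u}(A)$ is $\mathbf{u}$ with coordinates outside $A$ zeroed. $g_{d,k}=\frac{(d-1)(d-2)}{(k-1)(k-2)}$. SAMPLING$(k,d,\mathbf{w})$: draw $I_1\in[d]$ with probability $|w_i|/\|\mathbf{w}\|_1$, then $k-1$ distinct indices uniformly without replacement from $[d]\setminus\{I_1\}$; return the $k$-set. Exploration rounds $t=s^2$: $B_s=$SAMPLING$(k,d,\hat{\mathbf{w}}_{s-1})$ (with $\hat{\mathbf{w}}_0=\frac1d\mathbf{1}_d$);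 observe $x_{t,i}$, $i\in B_s$, and $y_t$. With $\mathbb{P}$ the probability over $B_s$ given the past, $\hat x_{t,i}=\frac{x_{t,i}}{\mathbb{P}[i\in B_s]}\mathbb{I}_{i\in B_s}$, $h_t[i,i]=\frac{x_{t,i}^2}{\mathbb{P}[i\in B_s]}\mathbb{I}_{i\in B_s}$, $h_t[i,j]=\frac{x_{t,i}x_{t,j}}{\mathbb{P}[i,j\in B_s]}\mathbb{I}_{i,j\in B_s}$; $\hat{\mathbf{X}}_{\mathcal{I}_s}\mathbf{Y}_{\mathcal{I}_s}=\sum_{\tau=1}^s\hat{\mathbf{x}}_{\tau^2}y_{\tau^2}$, $\mathbf{H}_{\mathcal{I}_s}=\sum_{\tau=1}^s\mathbf{h}_{\tau^2}$. $\mathrm{DS}(\gamma)$ is the program: minimize $\|\mathbf{w}\|_1$ over $\mathbf{w}\in\mathbb{R}^d$ subject to $\|\frac1s\hat{\mathbf{X}}_{\mathcal{I}_s}\mathbf{Y}_{\mathcal{I}_s}-\frac1s\mathbf{H}_{\mathcal{I}_s}\mathbf{w}\|_\infty\le\gamma$, and $\hat\gamma_s>0$ is the algorithm's data-dependent threshold at exploration index $s$. *)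

(* Defs.v *)
From mathcomp Require Import all_boot all_order all_algebra.
Set Implicit Arguments. Unset Strict Implicit. Unset Printing Implicit Defensive.
Import Order.TTheory GRing.Theory Num.Theory.
Local Open Scope ring_scope.

Definition norm1 (R : numDomainType) (d : nat) (w : 'I_d -> R) : R :=
  \sum_(i < d) `|w i|.

Definition supp (R : numDomainType) (d : nat) (w : 'I_d -> R) : {set 'I_d} :=
  [set i | w i != 0].

Definition restrict (R : numDomainType) (d : nat) (u : 'I_d -> R) (A : {set 'I_d})
  : 'I_d -> R := fun i => if i \in A then u i else 0.

Definition DS_feasible (R : numDomainType) (d : nat) (b : 'I_d -> R)
  (H : 'I_d -> 'I_d -> R) (gamma : R) (w : 'I_d -> R) : Prop :=
  forall i : 'I_d, `|b i - \sum_(j < d) H i j * w j| <= gamma.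

Definition DS_solution (R : numDomainType) (d : nat) (b : 'I_d -> R)
  (H : 'I_d -> 'I_d -> R) (gamma : R) (w : 'I_d -> R) : Prop :=
  DS_feasible b H gamma w /\
  forall v, DS_feasible b H gamma v -> norm1 w <= norm1 v.

(* Main.v *)
Require Import Defs.
From mathcomp Require Import all_boot all_order all_algebra.
From mathcomp Require Import zify lra.
Import Order.TTheory GRing.Theory Num.Theory.
Local Open Scope ring_scope.

Lemma sum_swap_le (R : realFieldType) (d : nat) (f : 'I_d -> R) (A B : {set 'I_d}) :
  (#|A| <= #|B|)%N -> (forall i, 0 <= f i) ->
  (forall a b, a \in A -> b \in B -> f a <= f b) ->
  \sum_(i in A) f i <= \sum_(i in B) f i.
Proof.
move=> hAB f0 hf.
have h : (\sum_(i in A) f i) *+ #|B| <= (\sum_(i in B) f i) *+ #|A|.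
  rewrite -!sumr_const [X in X <= _]exchange_big /=.
  apply: ler_sum => a aA; apply: ler_sum => b bB; exact: hf.
have sB0 : 0 <= \sum_(i in B) f i by apply: sumr_ge0.
case: (posnP #|B|) => hB.
  have : #|A| = 0%N by move: hAB; rewrite hB; case: #|A|.
  move/eqP; rewrite cards_eq0 => /eqP ->; by rewrite big_set0.
have h2 : (\sum_(i in B) f i) *+ #|A| <= (\sum_(i in B) f i) *+ #|B|.
  exact: ler_wpMn2l.
move: (le_trans h h2); rewrite lerMn2r => /orP [/eqP e|//].
by rewrite e in hB.
Qed.

Theorem lemma5 (R : realFieldType) (d k s : nat)
  (hk3 : (3 <= k)%N) (hkd : (k <= d - 3)%N) (hs : (1 <= s)%N)
  (wstar : 'I_d -> R)
  (hw1 : norm1 wstar <= 1) (hw0 : (#|supp wstar| <= k)%N)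
  (XY : 'I_d -> R) (Hs : 'I_d -> 'I_d -> R) (gamma : R) (hgamma : 0 < gamma)
  (what : 'I_d -> R)
  (hDS : DS_solution (fun i => s%:R^-1 * XY i) (fun i j => s%:R^-1 * Hs i j)
           gamma what)
  (Ss : {set 'I_d}) (hSs : #|Ss| = k)
  (htop : forall i j, i \in Ss -> j \notin Ss -> `|what j| <= `|what i|) :
  norm1 (fun i => restrict wstar (supp wstar :&: Ss) i - wstar i)
    <= norm1 (fun i => what i - wstar i).
Proof.
set S := supp wstar.
set A := S :\: Ss.
set B := Ss :\: S.
have hAB : (#|A| <= #|B|)%N.
  have e1 := cardsID Ss S. have e2 := cardsID S Ss.
  rewrite setIC in e2. rewrite /A /B -(leq_add2l #|S :&: Ss|) e1 e2 hSs //.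
have hsw : \sum_(i in A) `|what i| <= \sum_(i in B) `|what i|.
  apply: sum_swap_le => // a b.
  rewrite !inE => /andP [aN _] /andP [_ bS]; exact: htop.
have pt : forall i,
  `|restrict wstar (S :&: Ss) i - wstar i| + (if i \in B then `|what i| else 0)
  <= `|what i - wstar i| + (if i \in A then `|what i| else 0).
  move=> i; rewrite /restrict /A /B !inE /S /supp ?inE.
  case: (boolP (wstar i == 0)) => [/eqP e | wn0]; case: (boolP (i \in Ss)) => hi;
    rewrite ?e ?eqxx ?wn0 ?hi /= ?subr0 ?subrr ?normr0 ?add0r ?addr0 //.
  rewrite normrN.
  have -> : what i - wstar i = - (wstar i - what i) by rewrite opprB.
  rewrite normrN; have h := ler_normD (wstar i - what i) (what i).
  by rewrite subrK in h.
have : \sum_(i < d) (`|restrict wstar (S :&: Ss) i - wstar i| + (if i \in B then `|what i| else 0))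
  <= \sum_(i < d) (`|what i - wstar i| + (if i \in A then `|what i| else 0)).
  by apply: ler_sum => i _; exact: pt.
rewrite !big_split /= -!big_mkcond /= => H.
rewrite /norm1; move: H hsw.
set L := \sum_(i < d) _. set Rr := \sum_(i < d) _. set sA := \sum_(i in A) _. set sB := \sum_(i in B) _.
lra.
Qed.
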